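(* There exists an absolute constant $C$ such that for every integer $k\geq 1$, every $k$-nearest-neighbour graph of a finite point set in $\mathbb{R}^2$, drawn with straight-line edges, has every edge involved in at most $Ck^2$ crossings; in particular every $k$-nearest-neighbour graph is $Ck^2$-planar.
   Context: For a finite set $P\subset\mathbb{R}^2$ and $v\in P$, let $N_k(v)$ be the set of $k$ points of $P\setminus\{v\}$ closest to $v$ in Euclidean distance. The $k$-nearest-neighbour graph of $P$ is the geometric graph with vertex set $P$ in which $vw$ is an edge iff $w\in N_k(v)$ or $v\in N_k(w)$, edges being the straight-line segments between their endpoints. A graph is $m$-planar if it has a drawing in the plane in which each edge is involved in at most $m$ crossings. *)

(* Defs.v *)
From HB Require Import structures.
From mathcomp Require Import all_boot all_order all_algebra.
From mathcomp Require Import finmap.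
From mathcomp Require Import reals.
Set Implicit Arguments. Unset Strict Implicit. Unset Printing Implicit Defensive.
Import Order.TTheory GRing.Theory Num.Theory.
Local Open Scope ring_scope.


Definition pt (R : realType) := (R * R)%type.

(* Squared Euclidean distance (comparing squared distances = comparing distances). *)
Definition sqdist (R : realType) (p q : pt R) : R :=
  ((fst p) - (fst q)) ^+ 2 + ((snd p) - (snd q)) ^+ 2.

(* N is a valid choice of k-nearest-neighbour sets for the finite point set P:
   N v is a set of min(k, |P|-1) points of P \ {v}, and every point of N v is
   at least as close to v as every point of P \ {v} not in N v.
   (Ties are broken arbitrarily; the theorem quantifies over all choices.) *)
Definition knn_choice (R : realType) (k : nat) (P : {fset pt R})
    (N : pt R -> {fset pt R}) : Prop :=
  forall v, v \in P ->
    [/\ (N v `<=` P `\ v)%fset,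
        #|` N v| = minn k (#|` P| - 1)%N
      & forall w u, w \in N v -> u \in (P `\ v)%fset -> u \notin N v ->
          sqdist v w <= sqdist v u].

Definition knn_edge (R : realType) (P : {fset pt R}) (N : pt R -> {fset pt R})
    (v w : pt R) : Prop :=
  [/\ v \in P, w \in P & (w \in N v) || (v \in N w)].

Definition on_seg (R : realType) (p q x : pt R) : Prop :=
  exists t : R, [/\ 0 <= t, t <= 1,
    (fst x) = (fst p) + t * ((fst q) - (fst p)) & (snd x) = (snd p) + t * ((snd q) - (snd p))].

Definition seg_cross (R : realType) (a b c d : pt R) : Prop :=
  [/\ a != c, a != d, b != c, b != d &
      exists x, on_seg a b x /\ on_seg c d x].

(* Main.v *)
Require Import Defs.
From HB Require Import structures.
From mathcomp Require Import all_boot all_order all_algebra.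
From mathcomp Require Import finmap.
From mathcomp Require Import reals.
From mathcomp Require Import ring lra zify.
Import Order.TTheory GRing.Theory Num.Theory.
Set Implicit Arguments. Unset Strict Implicit. Unset Printing Implicit Defensive.
Local Open Scope ring_scope.



Definition dotp {R : realType} (p q o : pt R) : R :=
  (p.1 - o.1) * (q.1 - o.1) + (p.2 - o.2) * (q.2 - o.2).

Lemma sqdist_dot {R : realType} (p q o : pt R) :
  sqdist p q = sqdist p o + sqdist q o - 2 * dotp p q o.
Proof. rewrite /sqdist /dotp; ring. Qed.

Lemma sqdist_sym {R : realType} (p q : pt R) : sqdist p q = sqdist q p.
Proof. rewrite /sqdist; ring. Qed.

Lemma sqdist_gt0 {R : realType} (p q : pt R) : p != q -> 0 < sqdist p q.
Proof.
case: p q => [p1 p2] [q1 q2] npq; rewrite /sqdist /=.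
have: (p1 - q1 != 0) || (p2 - q2 != 0).
  apply: contraR npq; rewrite negb_or !negbK !subr_eq0.
  by case/andP => /eqP-> /eqP->.
have h1 := sqr_ge0 (p1 - q1); have h2 := sqr_ge0 (p2 - q2).
case/orP => h.
  have : 0 < (p1 - q1) ^+ 2 by rewrite lt0r h1 andbT expf_neq0.
  lra.
have : 0 < (p2 - q2) ^+ 2 by rewrite lt0r h2 andbT expf_neq0.
lra.
Qed.

Lemma wsum_pos {R : realType} (t u p q r s : R) : 0 <= t -> t <= 1 -> 0 <= u -> u <= 1 ->
  0 < p -> 0 < q -> 0 < r -> 0 < s -> (1-u) * p + u * q + (1-t) * r + t * s != 0.
Proof.
move=> *; apply/negP => /eqP H.
have : 0 < (1-u) * p + u * q by nra.
have : 0 <= (1-t) * r + t * s by nra.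
lra.
Qed.

Lemma quad {R : realType} (a b c d x : pt R) (t u : R) : 0 <= t -> t <= 1 -> 0 <= u -> u <= 1 ->
  x.1 = a.1 + t * (b.1 - a.1) -> x.2 = a.2 + t * (b.2 - a.2) ->
  x.1 = c.1 + u * (d.1 - c.1) -> x.2 = c.2 + u * (d.2 - c.2) ->
  [\/ dotp a b c <= 0, dotp a b d <= 0, dotp c d a <= 0 | dotp c d b <= 0].
Proof.
case: a b c d x => [a1 a2] [b1 b2] [c1 c2] [d1 d2] [x1 x2] /= t0 t1 u0 u1 e1 e2 e3 e4.
have key : forall X1 X2 E1 E2 F1 F2 : R,
  (1-u) * dotp (X1 - t*E1, X2 - t*E2) (X1 + (1-t)*E1, X2 + (1-t)*E2) (X1 - u*F1, X2 - u*F2)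
  + u * dotp (X1 - t*E1, X2 - t*E2) (X1 + (1-t)*E1, X2 + (1-t)*E2) (X1 + (1-u)*F1, X2 + (1-u)*F2)
  + (1-t) * dotp (X1 - u*F1, X2 - u*F2) (X1 + (1-u)*F1, X2 + (1-u)*F2) (X1 - t*E1, X2 - t*E2)
  + t * dotp (X1 - u*F1, X2 - u*F2) (X1 + (1-u)*F1, X2 + (1-u)*F2) (X1 + (1-t)*E1, X2 + (1-t)*E2) = 0.
  by move=> *; rewrite /dotp /=; ring.
have := key x1 x2 (b1 - a1) (b2 - a2) (d1 - c1) (d2 - c2).
rewrite (_ : x1 - t * (b1 - a1) = a1); last by lra.
rewrite (_ : x2 - t * (b2 - a2) = a2); last by lra.
rewrite (_ : x1 + (1 - t) * (b1 - a1) = b1); last by lra.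
rewrite (_ : x2 + (1 - t) * (b2 - a2) = b2); last by lra.
rewrite (_ : x1 - u * (d1 - c1) = c1); last by lra.
rewrite (_ : x2 - u * (d2 - c2) = c2); last by lra.
rewrite (_ : x1 + (1 - u) * (d1 - c1) = d1); last by lra.
rewrite (_ : x2 + (1 - u) * (d2 - c2) = d2); last by lra.
move=> K.
have [h1|h1] := lerP (dotp (a1, a2) (b1, b2) (c1, c2)) 0; first by constructor 1.
have [h2|h2] := lerP (dotp (a1, a2) (b1, b2) (d1, d2)) 0; first by constructor 2.
have [h3|h3] := lerP (dotp (c1, c2) (d1, d2) (a1, a2)) 0; first by constructor 3.
have [h4|h4] := lerP (dotp (c1, c2) (d1, d2) (b1, b2)) 0; first by constructor 4.
by have := wsum_pos t0 t1 u0 u1 h1 h2 h3 h4; rewrite K eqxx.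
Qed.


Definition vsub {R : realType} (p q : pt R) : pt R := (p.1 - q.1, p.2 - q.2).
Definition vdot {R : realType} (u w : pt R) : R := u.1 * w.1 + u.2 * w.2.
Definition oct {R : realType} (u : pt R) : bool := (0 <= u.2) && (u.2 <= u.1).
Definition rot {R : realType} (i : nat) (u : pt R) : pt R :=
  match i with
  | 0 => u | 1 => (u.2, u.1) | 2 => (u.2, - u.1) | 3 => (- u.1, u.2)
  | 4 => (- u.1, - u.2) | 5 => (- u.2, - u.1) | 6 => (- u.2, u.1)
  | _ => (u.1, - u.2) end.

Lemma rot_vdot {R : realType} i (u w : pt R) : vdot (rot i u) (rot i w) = vdot u w.
Proof. by case: i => [|[|[|[|[|[|[|i]]]]]]]; rewrite /vdot /=; ring. Qed.

Lemma rot_cover {R : realType} (u : pt R) : exists2 i, (i < 8)%N & oct (rot i u).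
Proof.
case: u => x y.
have [hx|hx] := lerP 0 x; have [hy|hy] := lerP 0 y;
have [hxy|hxy] := lerP x y; have [hxy'|hxy'] := lerP (- x) y;
first [ exists 0%N; [done | rewrite /oct /=; apply/andP; split; lra]
      | exists 1%N; [done | rewrite /oct /=; apply/andP; split; lra]
      | exists 2%N; [done | rewrite /oct /=; apply/andP; split; lra]
      | exists 3%N; [done | rewrite /oct /=; apply/andP; split; lra]
      | exists 4%N; [done | rewrite /oct /=; apply/andP; split; lra]
      | exists 5%N; [done | rewrite /oct /=; apply/andP; split; lra]
      | exists 6%N; [done | rewrite /oct /=; apply/andP; split; lra]
      | exists 7%N; [done | rewrite /oct /=; apply/andP; split; lra]
      | idtac ].
Qed.

Lemma oct_lemma {R : realType} (U W : pt R) : oct U -> oct W -> 0 < vdot U U ->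
  vdot U U <= vdot W W -> vdot U U < 2 * vdot U W.
Proof.
case: U W => [u1 u2] [w1 w2]; rewrite /oct /vdot /= => /andP[hu2 hu1] /andP[hw2 hw1] hU hUW.
have u10 : 0 <= u1 by lra.
have w10 : 0 <= w1 by lra.
have S0 : 0 <= u1 * w1 + u2 * w2 by rewrite addr_ge0 // mulr_ge0.
have p1 : 0 <= u1^+2 - u2^+2 by rewrite subr_ge0 ler_sqr // nnegrE.
have p2 : 0 <= w1^+2 - w2^+2 by rewrite subr_ge0 ler_sqr // nnegrE.
have p3 : 0 <= (u1 * u2) * (w1 * w2) by rewrite !mulr_ge0.
have key : 0 <= (u1^+2 - u2^+2) * (w1^+2 - w2^+2) + 4 * ((u1 * u2) * (w1 * w2)).
  by rewrite addr_ge0 // ?mulr_ge0.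
have k2 : (u1 * u1 + u2 * u2) * (w1 * w1 + w2 * w2) <= 2 * (u1 * w1 + u2 * w2)^+2.
  rewrite -subr_ge0; move: key; congr (_ <= _); ring.
have k3 : (u1 * u1 + u2 * u2) ^+ 2 <= (u1 * u1 + u2 * u2) * (w1 * w1 + w2 * w2).
  by rewrite expr2 ler_wpM2l //; lra.
set A := u1 * u1 + u2 * u2 in hU hUW k2 k3 *.
set B := u1 * w1 + u2 * w2 in S0 k2 *.
rewrite ltNge; apply/negP => hle.
have : (2 * B) ^+ 2 <= A ^+ 2 by rewrite ler_sqr // nnegrE; lra.
have : 0 < A ^+ 2 by rewrite exprn_gt0.
nra.
Qed.


Lemma knn_sub {R : realType} k (P : {fset pt R}) N (HN : knn_choice k P N) v w :
  v \in P -> w \in N v -> w \in P /\ w != v.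
Proof.
move=> vP wN; have [/fsubsetP sub _ _] := HN v vP.
by have := sub w wN; rewrite in_fsetD1 => /andP[-> ->].
Qed.

Lemma knn_size {R : realType} k (P : {fset pt R}) N (HN : knn_choice k P N) v :
  v \in P -> (size (N v) <= k)%N.
Proof. by move=> vP; have [_ -> _] := HN v vP; apply: geq_minl. Qed.

Lemma closer_in {R : realType} k (P : {fset pt R}) N (HN : knn_choice k P N) v w u :
  v \in P -> w \in N v -> u \in P -> u != v -> sqdist v u < sqdist v w -> u \in N v.
Proof.
move=> vP wN uP uv lt; apply/negPn/negP => uN.
have [_ _ H] := HN v vP.
have := H w u wN; rewrite in_fsetD1 uv uP => /(_ isT uN).
by rewrite leNgt lt.
Qed.

Lemma on_seg_sym {R : realType} (p q x : pt R) : on_seg p q x -> on_seg q p x.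
Proof.
case=> t [t0 t1 e1 e2]; exists (1 - t); split; rewrite ?e1 ?e2; try lra; ring.
Qed.

Lemma seg_cross_swap1 {R : realType} (a b c d : pt R) : seg_cross a b c d -> seg_cross b a c d.
Proof. by case=> h1 h2 h3 h4 [x [o1 o2]]; split => //; exists x; split => //; apply: on_seg_sym. Qed.

Lemma seg_cross_swap2 {R : realType} (a b c d : pt R) : seg_cross a b c d -> seg_cross a b d c.
Proof. by case=> h1 h2 h3 h4 [x [o1 o2]]; split => //; exists x; split => //; apply: on_seg_sym. Qed.

Lemma classify {R : realType} k (P : {fset pt R}) N (HN : knn_choice k P N) a b c d :
  a \in P -> b \in N a -> c \in P -> d \in N c -> seg_cross a b c d ->
  [|| c \in N a, a \in N c, b \in N c | d \in N a].
Proof.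
move=> aP bN cP dN [ac ad bc bd [x [[t [t0 t1 e1 e2]] [u [u0 u1 e3 e4]]]]].
have [bP _] := knn_sub HN aP bN.
have [dP _] := knn_sub HN cP dN.
case: (quad t0 t1 u0 u1 e1 e2 e3 e4) => h.
- apply/orP; left; apply: (closer_in HN aP bN cP); first by rewrite eq_sym.
  rewrite (sqdist_dot a b c).
  have := sqdist_gt0 bc; lra.
- do 3 (apply/orP; right); apply: (closer_in HN aP bN dP); first by rewrite eq_sym.
  rewrite (sqdist_dot a b d).
  have := sqdist_gt0 bd; lra.
- apply/orP; right; apply/orP; left; apply: (closer_in HN cP dN aP) => //.
  rewrite (sqdist_dot c d a).
  rewrite eq_sym in ad; have := sqdist_gt0 ad; lra.
- apply/orP; right; apply/orP; right; apply/orP; left.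
  apply: (closer_in HN cP dN bP) => //.
  rewrite (sqdist_dot c d b).
  rewrite eq_sym in bd; have := sqdist_gt0 bd; lra.
Qed.

Lemma seq_max {R : realType} (T : eqType) (f : T -> R) (s : seq T) x0 :
  x0 \in s -> exists2 x, x \in s & forall y, y \in s -> f y <= f x.
Proof.
elim: s x0 => // z s IH x0 _.
case: s IH => [|w s] IH.
  by exists z; rewrite ?mem_head // => y; rewrite inE => /eqP->.
have [m ms hm] := IH w (mem_head _ _).
have [h|h] := lerP (f z) (f m).
  exists m; first by rewrite inE ms orbT.
  by move=> y; rewrite inE => /orP[/eqP->|/hm].
exists z; first exact: mem_head.
move=> y; rewrite inE => /orP[/eqP->//|/hm hy].
exact: le_trans hy (ltW h).
Qed.

Lemma cone_bound {R : realType} k (P : {fset pt R}) N (HN : knn_choice k P N) v i :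
  (size [seq c <- P | (v \in N c) && oct (rot i (vsub c v))] <= k)%N.
Proof.
set Q := [seq c <- _ | _].
have uQ : uniq Q by rewrite filter_uniq // fset_uniq.
case EQ: Q => [|c0 Q'] //; rewrite -EQ.
have c0Q : c0 \in Q by rewrite EQ mem_head.
have [c' c'Q hmax] := seq_max (fun c => sqdist c v) c0Q.
move: (c'Q); rewrite mem_filter => /andP[/andP[vNc' oc'] c'P].
have sub : {subset v :: rem c' Q <= N c'}.
  move=> y; rewrite inE => /orP[/eqP->//|].
  rewrite (mem_rem_uniq _ uQ) inE => /andP[yc' yQ].
  move: (yQ); rewrite mem_filter => /andP[/andP[vNy oy] yP].
  apply: (closer_in HN c'P vNc' yP yc').
  have [_ vy] := knn_sub HN yP vNy.
  have pos := sqdist_gt0 vy.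
  have le := hmax y yQ.
  have eq1 : sqdist c' y = vdot (vsub c' v) (vsub c' v) + vdot (vsub y v) (vsub y v)
     - 2 * vdot (vsub y v) (vsub c' v) by rewrite /sqdist /vdot /vsub /=; ring.
  have eq2 : sqdist c' v = vdot (vsub c' v) (vsub c' v) by rewrite /sqdist /vdot /vsub /=; ring.
  have eq3 : sqdist y v = vdot (vsub y v) (vsub y v) by rewrite /sqdist /vdot /vsub /=; ring.
  have eq4 : sqdist v y = sqdist y v by apply: sqdist_sym.
  have := oct_lemma oy oc'.
  rewrite !rot_vdot => H.
  have := H ltac:(lra) ltac:(lra).
  lra.
have uv : uniq (v :: rem c' Q).
  rewrite /= rem_uniq // andbT; apply/negP => /mem_rem.
  rewrite mem_filter => /andP[/andP[vNv _] vP].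
  by have [_] := knn_sub HN vP vNv; rewrite eqxx.
have := uniq_leq_size uv sub.
rewrite /= size_rem // => h.
apply: leq_trans (knn_size HN c'P).
by rewrite EQ /= in h *.
Qed.

Lemma count_cover (T : eqType) (p : pred T) (q : nat -> pred T) (n : nat) (s : seq T) :
  (forall x, p x -> exists2 i, (i < n)%N & q i x) ->
  (count p s <= \sum_(i < n) count (predI p (q i)) s)%N.
Proof.
move=> H; elim: s => [|x s IH] /=; first by rewrite big1.
rewrite big_split /= leq_add //.
case px: (p x) => //=.
have [i hi qi] := H x px.
by rewrite (bigD1 (Ordinal hi)) //= qi.
Qed.

Lemma indeg {R : realType} k (P : {fset pt R}) N (HN : knn_choice k P N) v :
  (size [seq c <- P | v \in N c] <= 8 * k)%N.
Proof.
rewrite size_filter.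
apply: leq_trans (count_cover (q := fun i c => oct (rot i (vsub c v))) (n := 8) _ _) _.
  by move=> x _; apply: rot_cover.
apply: (@leq_trans (\sum_(i < 8) k)).
  apply: leq_sum => i _; rewrite -size_filter.
  exact: (cone_bound HN v i).
by rewrite sum_nat_const card_ord.
Qed.

Lemma card_le_seq (T : choiceType) (U : eqType) (S : {fset T}) (f : U -> T) (ps : seq U) :
  (forall e, e \in S -> exists2 p, p \in ps & e = f p) -> (#|` S| <= size ps)%N.
Proof.
move=> H; rewrite -(size_map f ps); apply: uniq_leq_size (fset_uniq S) _.
by move=> e /H [p pin ->]; apply: map_f.
Qed.

Lemma size_flat (T U : eqType) (s : seq T) (g : T -> seq U) m :
  (forall x, x \in s -> (size (g x) <= m)%N) -> (size (flatten (map g s)) <= size s * m)%N.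
Proof.
elim: s => //= x s IH H.
rewrite size_cat mulSn leq_add ?H ?mem_head // IH // => y ys.
by apply: H; rewrite inE ys orbT.
Qed.

Lemma oriented {R : realType} k (P : {fset pt R}) N (HN : knn_choice k P N) a b
  (S : {fset {fset pt R}}) : a \in P -> b \in N a ->
  (forall e, e \in S -> exists c d : pt R,
          [/\ e = [fset c; d]%fset, knn_edge P N c d & seg_cross a b c d]) ->
  (#|` S| <= 25 * k ^ 2)%N.
Proof.
move=> aP bN HS.
pose In := fun v => [seq c <- P | v \in N c].
pose X := (N a : seq _) ++ In a ++ In b.
pose ps := flatten [seq [seq (c, d) | d <- N c] | c <- X] ++
           flatten [seq [seq (c, d) | c <- In d] | d <- N a].
have mem : forall c d, c \in P -> d \in N c -> seg_cross a b c d -> (c, d) \in ps.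
  move=> c d cP dN hx; rewrite mem_cat.
  case/or4P: (classify HN aP bN cP dN hx) => h.
  - apply/orP; left; apply/flatten_mapP; exists c; last exact: map_f.
    by rewrite !mem_cat h.
  - apply/orP; left; apply/flatten_mapP; exists c; last exact: map_f.
    by rewrite !mem_cat mem_filter h cP orbT.
  - apply/orP; left; apply/flatten_mapP; exists c; last exact: map_f.
    by rewrite !mem_cat !mem_filter h cP !orbT.
  - apply/orP; right; apply/flatten_mapP; exists d => //.
    by apply: (map_f (fun c0 => (c0, d))); rewrite mem_filter dN cP.
apply: (@leq_trans (size ps)).
  apply: (card_le_seq (f := fun p => [fset p.1; p.2]%fset)).
  move=> e /HS [c [d [-> [cP dP hcd] hx]]].
  case/orP: hcd => h.
    by exists (c, d) => //; apply: mem.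
  exists (d, c); first by apply: mem => //; apply: seg_cross_swap2.
  by rewrite /= fsetUC.
have hX : (size X <= 17 * k)%N.
  rewrite /X !size_cat.
  have h1 := knn_size HN aP.
  have h2 := indeg HN a; have h3 := indeg HN b.
  rewrite /In; apply: leq_trans (leq_add h1 (leq_add h2 h3)) _; lia.
have f1 : (size (flatten [seq [seq (c, d) | d <- N c] | c <- X]) <= size X * k)%N.
  apply: size_flat => c cX; rewrite size_map.
apply: (knn_size HN).
  move: cX; rewrite !mem_cat => /or3P[h|h|h].
  - by have [] := knn_sub HN aP h.
  - by move: h; rewrite mem_filter => /andP[].
  - by move: h; rewrite mem_filter => /andP[].
have f2 : (size (flatten [seq [seq (c, d) | c <- In d] | d <- N a]) <= size (N a) * (8 * k))%N.
  by apply: size_flat => d _; rewrite size_map; apply: indeg HN d.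
have h1 := knn_size HN aP.
rewrite /ps size_cat.
have g1 : (size X * k <= 17 * k * k)%N by rewrite leq_mul.
have g2 : (size (N a) * (8 * k) <= k * (8 * k))%N by rewrite leq_mul.
nia.
Qed.

Local Open Scope fset_scope.

Theorem lemma37 : exists C : nat,
  forall (R : realType) (k : nat) (P : {fset pt R}) (N : pt R -> {fset pt R}),
    (1 <= k)%N -> knn_choice k P N ->
    forall a b : pt R, knn_edge P N a b ->
    forall S : {fset {fset pt R}},
      (forall e, e \in S -> exists c d : pt R,
          [/\ e = [fset c; d], knn_edge P N c d & seg_cross a b c d]) ->
      (#|` S| <= C * k ^ 2)%N.
Proof.
exists 25%N => R k P N _ HN a b [aP bP hab] S HS.
case/orP: hab => h.
  exact: (oriented HN aP h HS).
apply: (oriented HN bP h) => e /HS [c [d [-> he hx]]].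
by exists c, d; split => //; apply: seg_cross_swap1.
Qed.
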